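(* Let $\mathcal{A}$ be a $d$-regular, strongly $\chi$-colorable 2-complex with coloring $C$, let $\mathcal{G}=G_1\times\cdots\times G_\chi$ and $F_1,\dots,F_\chi$ as in the construction below, and suppose that $\mathcal{C}=HDZ^{-}[\mathcal{A},C,\mathcal{G},F_1,\dots,F_\chi]$ is a commutative triplet structure. Then $\mathcal{C}$ has $|\mathcal{G}|$ vertices, every vertex of $\mathcal{C}$ lies in exactly $3|\mathcal{A}(2)|$ triangles, and $\mathcal{C}$ is $2d$-regular.
   Context: For a 2-complex $X$, $X(1)$ is the set of 2-sets in triangles, $X(2)$ the set of triangles; $X$ is $d$-regular if each edge of $X(1)$ lies in exactly $d$ triangles. A coloring is strong if every triangle has three differently colored vertices. Construction: let $V^c=\{V^c_1,\dots,V^c_{K_c}\}$ be the vertices of color $c$ ($K_c$ even); $F_c\subseteq G_c$ with $|F_c|=K_c$, ordered $F^c_1,\dots,F^c_{K_c}$ with $(F^c_i)^{-1}=F^c_{i+K_c/2}$ (indices mod $K_c$) and no element of order 2; identify $F^c_i$ with the element of $\mathcal{G}$ equal to $F^c_i$ in coordinate $c$ and identity elsewhere; $\phi(V^c_i)=F^c_i$; $\mathcal{S}$ is the complex with triangles $\{\phi(a),\phi(b),\phi(e)\}$, $\{a,b,e\}\in\mathcal{A}(2)$; $HDZ^{-}[\mathcal{A},C,\mathcal{G},F_1,\dots,F_\chi]=\{\sigma\cdot g:\sigma\in\mathcal{S},g\in\mathcal{G}\}$ where $\sigma\cdot g=\{sg:s\in\sigma\}$. With $\mathcal{T}=\mathcal{S}(1)$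 and $\mathcal{T}_o$ the ordered pairs of elements of $\mathcal{T}$, this is a commutative triplet structure if: (0) $\{s,s^{-1}\}\notin\mathcal{T}$; (A) $\mathcal{S}$ is regular; (B) $ab=ba$ for $\{a,b\}\in\mathcal{T}$; (C) $\{a,b\}\in\mathcal{T}\iff\{a^{-1},b^{-1}\}\in\mathcal{T}$; (D) for $t\ne t'\in\mathcal{T}_o$, $t_1t_2^{-1}=t'_1(t'_2)^{-1}$ implies $t'_2=t_1^{-1}$, $t'_1=t_2^{-1}$; (E) the 1-skeleton of $\mathcal{S}$ is connected. *)

(* Defs.v *)
From mathcomp Require Import all_boot all_fingroup.
Set Implicit Arguments. Unset Strict Implicit. Unset Printing Implicit Defensive.
Local Open Scope group_scope.

Section Complex.
Variable T : finType.

Definition is_2complex (X : {set {set T}}) : Prop :=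
  forall t, t \in X -> #|t| = 3.

Definition edges (X : {set {set T}}) : {set {set T}} :=
  [set e : {set T} | (#|e| == 2) && [exists t in X, e \subset t]].

Definition vertices (X : {set {set T}}) : {set T} := \bigcup_(t in X) t.

Definition regular (d : nat) (X : {set {set T}}) : Prop :=
  forall e, e \in edges X -> #|[set t in X | e \subset t]| = d.

Definition adj (X : {set {set T}}) : rel T := fun x y => [set x; y] \in edges X.

(** connected 1-skeleton (a connected graph is nonempty) *)
Definition skel_connected (X : {set {set T}}) : Prop :=
  vertices X != set0 /\
  forall x y, x \in vertices X -> y \in vertices X -> connect (adj X) x y.
End Complex.

Definition strong_coloring (V : finType) (chi : nat) (X : {set {set V}})
  (col : V -> 'I_chi) : Prop :=
  forall t, t \in X -> #|col @: t| = 3.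

Definition prodG (chi : nat) (gT : 'I_chi -> finGroupType) : finType :=
  {dffun forall c : 'I_chi, gT c}.

Definition pmul (chi : nat) (gT : 'I_chi -> finGroupType) (g h : prodG gT) : prodG gT :=
  [ffun c => (g c * h c)%g].

Definition pinv (chi : nat) (gT : 'I_chi -> finGroupType) (g : prodG gT) : prodG gT :=
  [ffun c => (g c)^-1%g].

Definition pembed (chi : nat) (gT : 'I_chi -> finGroupType) (c : 'I_chi) (x : gT c)
  : prodG gT := finfun (dfwith (fun c' => (1 : gT c')%g) x).

Definition rtrans (chi : nat) (gT : 'I_chi -> finGroupType)
  (s : {set prodG gT}) (g : prodG gT) : {set prodG gT} :=
  [set pmul x g | x in s].

Definition HDZ (chi : nat) (gT : 'I_chi -> finGroupType)
  (S : {set {set prodG gT}}) : {set {set prodG gT}} :=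
  [set rtrans s g | s in S, g in [set: prodG gT]].

(** commutative triplet structure, conditions (0),(A)-(E), with T = S(1) *)
Definition comm_triplet (chi : nat) (gT : 'I_chi -> finGroupType)
  (S : {set {set prodG gT}}) : Prop :=
  let T := edges S in
  (forall s, [set s; pinv s] \notin T) /\
      (exists d, regular d S) /\
      (forall a b, [set a; b] \in T -> pmul a b = pmul b a) /\
      (forall a b, ([set a; b] \in T) <-> ([set pinv a; pinv b] \in T)) /\
      (forall t1 t2 u1 u2, [set t1; t2] \in T -> [set u1; u2] \in T ->
          (t1, t2) <> (u1, u2) -> pmul t1 (pinv t2) = pmul u1 (pinv u2) ->
          u2 = pinv t1 /\ u1 = pinv t2) /\
      skel_connected S.

Definition imcomplex (V : finType) (chi : nat) (gT : 'I_chi -> finGroupType)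
  (phi : V -> prodG gT) (A2 : {set {set V}}) : {set {set prodG gT}} :=
  (fun t : {set V} => phi @: t) @: A2.

(* Main.v *)
Require Import Defs.
From mathcomp Require Import all_boot all_fingroup.
From mathcomp Require Import zify.
Set Implicit Arguments. Unset Strict Implicit. Unset Printing Implicit Defensive.

Section Grp.
Variables (chi : nat) (gT : 'I_chi -> finGroupType).
Local Notation G := (prodG gT).
Definition pone : G := [ffun c => 1%g].
Lemma pmulA (x y z : G) : pmul x (pmul y z) = pmul (pmul x y) z.
Proof. by apply/ffunP=> c; rewrite !ffunE mulgA. Qed.
Lemma pmul1 (x : G) : pmul x pone = x.
Proof. by apply/ffunP=> c; rewrite !ffunE mulg1. Qed.
Lemma pmul1l (x : G) : pmul pone x = x.
Proof. by apply/ffunP=> c; rewrite !ffunE mul1g. Qed.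
Lemma pmulV (x : G) : pmul x (pinv x) = pone.
Proof. by apply/ffunP=> c; rewrite !ffunE mulgV. Qed.
Lemma pmulVl (x : G) : pmul (pinv x) x = pone.
Proof. by apply/ffunP=> c; rewrite !ffunE mulVg. Qed.
Lemma pinvK (x : G) : pinv (pinv x) = x.
Proof. by apply/ffunP=> c; rewrite !ffunE invgK. Qed.
Lemma pinvM (x y : G) : pinv (pmul x y) = pmul (pinv y) (pinv x).
Proof. by apply/ffunP=> c; rewrite !ffunE invMg. Qed.
Lemma pinv_inj : injective (@pinv chi gT).
Proof. exact: can_inj pinvK. Qed.
Lemma pmulKr (x g : G) : pmul (pmul x g) (pinv g) = x.
Proof. by rewrite -pmulA pmulV pmul1. Qed.
Lemma pmulVKr (x g : G) : pmul (pmul x (pinv g)) g = x.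
Proof. by rewrite -pmulA pmulVl pmul1. Qed.
Lemma pmulKl (x g : G) : pmul (pinv g) (pmul g x) = x.
Proof. by rewrite pmulA pmulVl pmul1l. Qed.
Lemma pmulVKl (x g : G) : pmul g (pmul (pinv g) x) = x.
Proof. by rewrite pmulA pmulV pmul1l. Qed.
Lemma pmulIr (g : G) : injective (fun x => pmul x g).
Proof. by move=> x y /= /(congr1 (fun z => pmul z (pinv g))); rewrite !pmulKr. Qed.
Lemma pmulIl (g : G) : injective (pmul g).
Proof. by move=> x y /= /(congr1 (pmul (pinv g))); rewrite !pmulKl. Qed.

Lemma mem_rtrans (s : {set G}) g y : (y \in rtrans s g) = (pmul y (pinv g) \in s).
Proof.
apply/imsetP/idP => [[x xs ->]|ys]; first by rewrite pmulKr.
by exists (pmul y (pinv g)); rewrite ?pmulVKr.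
Qed.
Lemma card_rtrans (s : {set G}) g : #|rtrans s g| = #|s|.
Proof. by rewrite card_imset //; apply: pmulIr. Qed.
Lemma rtrans_comp (s : {set G}) a b : rtrans (rtrans s a) b = rtrans s (pmul a b).
Proof. by rewrite /rtrans -imset_comp; apply: eq_imset => x /=; rewrite pmulA. Qed.
Lemma rtrans_one (s : {set G}) : rtrans s pone = s.
Proof. by rewrite /rtrans (eq_imset _ (@pmul1 )) imset_id. Qed.
End Grp.
Arguments pone {chi gT}.

Section HDZ.
Variables (chi : nat) (gT : 'I_chi -> finGroupType).
Local Notation G := (prodG gT).
Variable S : {set {set G}}.
Hypothesis S3 : forall s, s \in S -> #|s| = 3.
Hypothesis H0 : forall s, [set s; pinv s] \notin edges S.
Hypothesis HB : forall a b, [set a; b] \in edges S -> pmul a b = pmul b a.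
Hypothesis HC : forall a b, ([set a; b] \in edges S) <-> ([set pinv a; pinv b] \in edges S).
Hypothesis HD : forall t1 t2 u1 u2, [set t1; t2] \in edges S -> [set u1; u2] \in edges S ->
          (t1, t2) <> (u1, u2) -> pmul t1 (pinv t2) = pmul u1 (pinv u2) ->
          u2 = pinv t1 /\ u1 = pinv t2.

Lemma edge_in (s : {set G}) x y : s \in S -> x \in s -> y \in s -> x != y ->
  [set x; y] \in edges S.
Proof.
move=> sS xs ys xy; rewrite inE cards2 xy /=; apply/existsP; exists s.
by rewrite sS subUset !sub1set xs ys.
Qed.

Lemma rtrans_inj s s' g g' : s \in S -> s' \in S -> rtrans s g = rtrans s' g' ->
  s = s' /\ g = g'.
Proof.
move=> sS s'S E.
set k := pmul g (pinv g').
have Es' : s' = rtrans s k.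
  by rewrite /k -rtrans_comp E rtrans_comp pmulV rtrans_one.
have [k1|k1] := eqVneq k pone.
  split; first by rewrite Es' k1 rtrans_one.
  by rewrite -(pmulVKr g g') -/k k1 pmul1l.
exfalso.
have key : forall x y, x \in s -> y \in s -> x != y -> pmul x k = pinv y.
  move=> x y xs ys xy.
  have e1 := edge_in sS xs ys xy.
  have xks : pmul x k \in s' by rewrite Es'; apply/imsetP; exists x.
  have yks : pmul y k \in s' by rewrite Es'; apply/imsetP; exists y.
  have xkyk : pmul x k != pmul y k.
    by apply: contra xy => /eqP /pmulIr ->.
  have e2 := edge_in s'S xks yks xkyk.
  have ne : (x, y) <> (pmul x k, pmul y k).
    case=> /(congr1 (pmul (pinv x))); rewrite pmulKl pmulVl => /esym.
    by move/eqP; rewrite (negbTE k1).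
  have := HD e1 e2 ne; rewrite pinvM pmulA pmulKr.
  by case=> // _ ->.
have : 2 < #|s| by rewrite S3.
case/card_gt2P => a [b [e [[as_ bs es] [ab be ea]]]].
have h1 := key a b as_ bs ab.
have h2 : pmul a k = pinv e by apply: key; rewrite // eq_sym.
by move: be; rewrite (pinv_inj (etrans (esym h1) h2)) eqxx.
Qed.

Lemma HDZ_vertices : vertices S != set0 -> vertices (HDZ S) = [set: G].
Proof.
case/set0Pn => x /bigcupP [s sS xs].
apply/setP => h; rewrite inE; apply/bigcupP.
exists (rtrans s (pmul (pinv x) h)); first by apply/imset2P; exists s (pmul (pinv x) h); rewrite ?inE.
by rewrite mem_rtrans pinvM pinvK pmulVKl.
Qed.

Lemma HDZ_vdeg h : #|[set t in HDZ S | h \in t]| = 3 * #|S|.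
Proof.
pose D := [set p : {set G} * G | (p.1 \in S) && (p.2 \in p.1)].
pose f := fun p : {set G} * G => rtrans p.1 (pmul (pinv p.2) h).
have -> : [set t in HDZ S | h \in t] = f @: D.
  apply/setP => t; rewrite inE; apply/andP/imsetP.
    case=> /imset2P [s g sS _ ->]; rewrite mem_rtrans => hs.
    exists (s, pmul h (pinv g)); first by rewrite inE /= sS hs.
    by rewrite /f /= pinvM pinvK pmulVKr.
  case=> [[s x]]; rewrite inE /= => /andP [sS xs] ->; split.
    by apply/imset2P; exists s (pmul (pinv x) h); rewrite ?inE.
  by rewrite mem_rtrans pinvM pinvK pmulVKl.
rewrite card_in_imset; last first.
  move=> [s x] [s' x']; rewrite !inE /= => /andP [sS _] /andP [s'S _].
  rewrite /f /= => E; case: (rtrans_inj sS s'S E) => -> /pmulIr /pinv_inj -> //.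
rewrite -sum1_card.
rewrite (eq_bigl (fun p : {set G} * G => (p.1 \in S) && (p.2 \in p.1))); last first.
  by move=> p; rewrite inE.
rewrite -(pair_big_dep (fun s => s \in S) (fun s x => x \in s) (fun _ _ => 1)) /=.
rewrite (eq_bigr (fun _ => 3)); last by move=> s sS; rewrite sum1_card S3.
by rewrite sum_nat_const mulnC.
Qed.

Variable d : nat.
Hypothesis Sreg : regular d S.

Lemma HDZ_reg : regular (2 * d) (HDZ S).
Proof.
move=> e; rewrite inE => /andP [/cards2P [h1 [h2 [h12 ->]]] /existsP [t0 /andP [t0C st0]]].
case/imset2P: t0C st0 => s0 g0 s0S _ ->.
rewrite subUset !sub1set !mem_rtrans => /andP [x0s y0s].
set x0 := pmul h1 (pinv g0) in x0s; set y0 := pmul h2 (pinv g0) in y0s.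
set r := pmul h2 (pinv h1).
have x0y0 : x0 != y0 by apply: contra h12 => /eqP /pmulIr ->.
have r1 : r != pone.
  apply: contra h12 => /eqP E; apply/eqP.
  by rewrite -(pmulVKr h2 h1) -/r E pmul1l.
have ry0 : pmul y0 (pinv x0) = r.
  by rewrite /x0 /y0 pinvM pinvK pmulA pmulVKr.
pose Pq := fun q : G * G => ([set q.1; q.2] \in edges S) && (pmul q.2 (pinv q.1) == r).
pose D := [set p : (G * G) * {set G} | Pq p.1 && [&& p.2 \in S, p.1.1 \in p.2 & p.1.2 \in p.2]].
pose f := fun p : (G * G) * {set G} => rtrans p.2 (pmul (pinv p.1.1) h1).
have -> : [set t in HDZ S | [set h1; h2] \subset t] = f @: D.
  apply/setP => t; rewrite inE; apply/andP/imsetP.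
    case=> /imset2P [s g sS _ ->]; rewrite subUset !sub1set !mem_rtrans => /andP [xs ys].
    exists ((pmul h1 (pinv g), pmul h2 (pinv g)), s); last first.
      by rewrite /f /= pinvM pinvK pmulVKr.
    rewrite inE /= sS xs ys /Pq /= pinvM pinvK pmulA pmulVKr eqxx andbT /=. idtac.
    rewrite andbT; apply: (edge_in sS xs ys); by apply: contra h12 => /eqP /pmulIr ->.
  case=> [[[x y] s]]; rewrite inE /= /Pq /= => /andP [/andP [_ /eqP ryx] /and3P [sS xs ys]] ->.
  split; first by apply/imset2P; exists s (pmul (pinv x) h1); rewrite ?inE.
  rewrite subUset !sub1set !mem_rtrans !pinvM !pinvK pmulVKl xs /=.
  by rewrite pmulA -/r -ryx pmulVKr.
rewrite card_in_imset; last first.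
  move=> [[x y] s] [[x' y'] s']; rewrite !inE /= /Pq /=.
  move=> /andP [/andP [_ /eqP ryx] /and3P [sS _ _]] /andP [/andP [_ /eqP ryx'] /and3P [s'S _ _]].
  rewrite /f /= => E; case: (rtrans_inj sS s'S E) => -> /pmulIr /pinv_inj ex.
  subst x'; congr (_, _, _).
  by rewrite -(pmulVKr y x) ryx -ryx' pmulVKr.
rewrite -sum1_card.
rewrite (eq_bigl (fun p : (G * G) * {set G} => Pq p.1 && [&& p.2 \in S, p.1.1 \in p.2 & p.1.2 \in p.2])); last first.
  by move=> p; rewrite inE.
rewrite -(pair_big_dep Pq (fun q s => [&& s \in S, q.1 \in s & q.2 \in s]) (fun _ _ => 1)) /=.
rewrite (eq_bigr (fun _ => d)); last first.
  move=> [x y] /andP [exy _] /=; rewrite -(Sreg exy) -sum1_card.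
  by apply: eq_bigl => s; rewrite !inE /= subUset !sub1set andbA.
rewrite (eq_bigl (mem [set (x0, y0); (pinv y0, pinv x0)])); last first.
  move=> [x y]; rewrite /Pq /= in_set2; apply/andP/orP.
  - case=> exy /eqP ryx.
    have [E|NE] := eqVneq (y0, x0) (y, x).
      by left; case: E => -> ->.
    have e1 : [set y0; x0] \in edges S by rewrite setUC; exact: (edge_in s0S x0s y0s x0y0).
    have e2 : [set y; x] \in edges S by rewrite setUC.
    have ne : (y0, x0) <> (y, x) by apply/eqP.
    have [-> ->] := HD e1 e2 ne (etrans ry0 (esym ryx)).
    by right.
  - case=> /eqP [-> ->].
      by rewrite (edge_in s0S x0s y0s x0y0) ry0.
    split; first by apply/(HC y0 x0); rewrite setUC; exact: (edge_in s0S x0s y0s x0y0).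
    rewrite pinvK; have comm := HB (edge_in s0S x0s y0s x0y0).
    apply/eqP; rewrite -ry0.
    by apply: (@pmulIl _ _ x0); rewrite pmulVKl pmulA comm pmulKr.
rewrite sum_nat_const cards2; suff -> : (x0, y0) != (pinv y0, pinv x0) by [].
apply/eqP => [[ex ey]]; apply: (negP (H0 x0)).
by rewrite -ey (edge_in s0S x0s y0s x0y0).
Qed.
End HDZ.

Lemma imsetS_inj (aT rT : finType) (f : aT -> rT) (A B : {set aT}) :
  injective f -> (f @: A \subset f @: B) = (A \subset B).
Proof.
move=> fi; apply/idP/idP; last exact: imsetS.
move=> /subsetP H; apply/subsetP => x xA.
by have := H (f x) (imset_f _ xA); rewrite mem_imset.
Qed.

Lemma mod_half_neq (K i : nat) : ~~ odd K -> i < K -> (i + K./2) %% K != i.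
Proof.
move=> ev iK; have := odd_double_half K; rewrite (negbTE ev) add0n => EK.
set m := K./2 in EK *. rewrite -EK in iK *.
apply/eqP => E.
rewrite -!muln2 in iK E.
have m0 : 0 < m by lia.
case: (ltnP i m) => h.
  by move: E; rewrite modn_small; lia.
have : i + m = (i - m) + m * 2 by lia.
move=> E2; rewrite E2 modnDr modn_small in E; lia.
Qed.

Unset Implicit Arguments. Set Strict Implicit.
Theorem mainTheorem10
  (V : finType) (A2 : {set {set V}}) (d chi : nat) (col : V -> 'I_chi)
  (gT : 'I_chi -> finGroupType)
  (K : 'I_chi -> nat)
  (Vc : forall c : 'I_chi, 'I_(K c) -> V)
  (Fc : forall c : 'I_chi, 'I_(K c) -> gT c)
  (phi : V -> prodG gT) :
  is_2complex A2 ->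
  regular d A2 ->
  strong_coloring A2 col ->
  (forall c, K c = #|[set v | col v == c]|) ->
  (forall c, injective (Vc c)) ->
  (forall c i, col (Vc c i) = c) ->
  (forall c, ~~ odd (K c)) ->
  (forall c, injective (Fc c)) ->
  (forall c (i j : 'I_(K c)), nat_of_ord j = (i + (K c)./2) %% K c ->
      Fc c j = ((Fc c i)^-1)%g) ->
  (forall c i, #[Fc c i]%g != 2) ->
  (forall c i, phi (Vc c i) = pembed (Fc c i)) ->
  comm_triplet (imcomplex phi A2) ->
  let C := HDZ (imcomplex phi A2) in
  [/\ #|vertices C| = #|[set: prodG gT]|,
      (forall h, h \in vertices C -> #|[set t in C | h \in t]| = 3 * #|A2|) &
      regular (2 * d) C].
Proof.
move=> A3 Areg _ KE Vinj Vcol Kev Finj Finv _ phiE CT C.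
have cover : forall v, exists i, Vc (col v) i = v.
  move=> v.
  have sub : [set Vc (col v) i | i : 'I_(K (col v))] \subset [set w | col w == col v].
    by apply/subsetP => _ /imsetP [i _ ->]; rewrite inE Vcol.
  have : [set Vc (col v) i | i : 'I_(K (col v))] == [set w | col w == col v].
    rewrite eqEcard sub card_imset; last exact: Vinj. rewrite (card_ord (K (col v))). rewrite KE /=; apply: eq_leq; apply: eq_card => w; rewrite !inE; apply/idP/idP => /eqP ->; apply/eqP; reflexivity.
  move/eqP/setP/(_ v); rewrite inE eqxx => /imsetP [i _ vE]; exists i; exact: (esym vE).
have Fne1 : forall c i, Fc c i != 1%g.
  move=> c i; apply/eqP => F1.
  have jlt : (i + (K c)./2) %% K c < K c by apply: ltn_pmod; apply: leq_ltn_trans (ltn_ord i).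
  have := Finv c i (Ordinal jlt) erefl; rewrite F1 invg1 -F1 => /Finj /(congr1 val) /= E.
  by move: (mod_half_neq (Kev c) (ltn_ord i)); rewrite E eqxx.
have pe : forall c (x : gT c), pembed x c = x.
  by move=> c x; rewrite /pembed ffunE dfwith_in.
have peo : forall c c' (x : gT c), c != c' -> pembed x c' = 1%g.
  by move=> c c' x ne; rewrite /pembed ffunE dfwith_out.
have phi_inj : injective phi.
  move=> u v; have [i <-] := cover u; have [j <-] := cover v; rewrite !phiE.
  move: (col u) (col v) i j => cu cv i j E.
  case: (eqVneq cu cv) => [ceq|ne].
    subst cv; have := congr1 (fun g : prodG gT => g cu) E; rewrite /= !pe => /Finj -> //.
  have := congr1 (fun g : prodG gT => g cu) E; rewrite /= pe peo 1?eq_sym // => F1.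
  by move: (Fne1 cu i); rewrite F1 eqxx.
set S := imcomplex phi A2 in CT C *.
have S3 : forall s, s \in S -> #|s| = 3.
  by move=> _ /imsetP [t tA ->]; rewrite card_imset // A3.
have cardS : #|S| = #|A2| by rewrite card_imset //; apply: imset_inj.
have Sreg : regular d S.
  move=> e; rewrite inE => /andP [ce /existsP [t' /andP [t'S et']]].
  case/imsetP: t'S et' => t tA -> et.
  set e0 := phi @^-1: e.
  have ee0 : phi @: e0 = e.
    apply/setP => y; apply/imsetP/idP => [[x]|ye]; first by rewrite inE => xe ->.
    by case/imsetP: (subsetP et y ye) => x _ yE; exists x; rewrite // inE -yE.
  have ce0 : #|e0| = 2 by rewrite -(card_imset _ phi_inj) ee0 (eqP ce).
  have e0t : e0 \subset t by rewrite -(imsetS_inj _ _ phi_inj) ee0.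
  have e0E : e0 \in edges A2.
    by rewrite inE ce0 eqxx /=; apply/existsP; exists t; rewrite tA.
  rewrite -(Areg e0 e0E).
  have -> : [set t in S | e \subset t] = (fun t0 : {set V} => phi @: t0) @: [set t0 in A2 | e0 \subset t0].
    apply/setP => s; rewrite inE; apply/andP/imsetP.
      case=> /imsetP [t2 t2A ->]; rewrite -ee0 imsetS_inj // => e0t2.
      by exists t2; rewrite // inE t2A.
    case=> t2; rewrite inE => /andP [t2A e0t2] ->; split; first exact: imset_f.
    by rewrite -ee0 imsetS_inj.
  by rewrite card_imset //; apply: imset_inj.
case: CT => H0 [_ [HB [HC [HD Hconn]]]].
split.
- by rewrite /C HDZ_vertices //; case: Hconn.
- by move=> h _; rewrite /C HDZ_vdeg // cardS.
- exact: HDZ_reg.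
Qed.
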